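(* Let $N=(S,T,F,M_0,\ell)$ be a structural conflict net. If there are $\sigma\in\mathrm{Act}^*$ and $a,b,c\in\mathrm{Act}$ with $a\ne c$ such that $\langle\sigma,\{\{a,c\}\}\rangle\notin\mathcal F(N)$, $\langle\sigma,\{\{b\}\}\rangle\notin\mathcal F(N)$ and $\langle\sigma,\{\{a,b\},\{b,c\}\}\rangle\in\mathcal F(N)$, then $N$ has a fully reachable pure $\mathsf M$.
   Context: Fix visible actions $\mathrm{Act}$ and $\tau\notin\mathrm{Act}$. A Petri net has disjoint $S,T$, $F:(S\times T)\cup(T\times S)\to\mathbb N$, $M_0\in\mathbb N^S$, $\ell:T\to\mathrm{Act}\cup\{\tau\}$. ${}^\bullet x(y)=F(y,x)$, $x^\bullet(y)=F(x,y)$, extended additively; multiset $\le,\cap,\cup$ pointwise $\le$, min, max. For finite nonempty multiset $G$ of transitions, $M[G\rangle M'$ iff ${}^\bullet G\le M$ and $M'=M-{}^\bullet G+G^\bullet$; reachable markings as usual; $t\smile u$ iff $M[\{t\}+\{u\}\rangle$ for some reachable $M$. Structural conflict net: $t\smile u\Rightarrow{}^\bullet t\cap{}^\bullet u=\emptyset$. Fully reachable pure $\mathsf M$: $t,u,v\in T$ with ${}^\bullet t\cap{}^\bullet u\ne\emptyset$, ${}^\bullet u\cap{}^\bullet v\ne\emptyset$, ${}^\bullet t\cap{}^\bullet v=\emptyset$ and a reachable $M$ with ${}^\bullet t\cup{}^\bullet u\cup{}^\bullet v\le M$. $M\xrightarrow{\alpha}M'$ iff $M[t\rangle M'$ with $\ell(t)=\alpha$;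 $\Rightarrow$ reflexive transitive closure of $\xrightarrow{\tau}$; $M\overset{a_1\cdots a_n}{\Longrightarrow}M'$ iff $M\Rightarrow\xrightarrow{a_1}\Rightarrow\cdots\xrightarrow{a_n}\Rightarrow M'$. For a step $A$ (finite nonempty multiset over $\mathrm{Act}$), $M\xrightarrow{A}$ iff $M[G\rangle$ for a finite multiset $G$ of transitions, none labelled $\tau$, with label multiset $A$. $\mathcal F(N)$ consists of all $\langle\sigma,X\rangle$, $\sigma\in\mathrm{Act}^*$, $X$ a finite set of steps, such that some $M$ has $M_0\overset{\sigma}{\Longrightarrow}M$, $M\not\xrightarrow{\tau}$ and $M\not\xrightarrow{A}$ for all $A\in X$. *)

(* Defs.v *)
From Stdlib Require Import List Permutation Relations Arith.
Import ListNotations.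

Record net (S T Act : Type) := Net {
  pre  : T -> S -> nat;          (* pre t s  = F(s,t) = (•t)(s) *)
  post : T -> S -> nat;          (* post t s = F(t,s) = (t•)(s) *)
  M0   : S -> nat;
  lab  : T -> option Act         (* None = tau *)
}.
Arguments Net {S T Act}.
Arguments pre {S T Act}.
Arguments post {S T Act}.
Arguments M0 {S T Act}.
Arguments lab {S T Act}.

Section Nets.
Context {S T Act : Type} (N : net S T Act).

Definition marking := S -> nat.

(* A finite multiset G of transitions is given by a list (order irrelevant). *)
Definition preG (G : list T) (s : S) : nat :=
  fold_right (fun t n => pre N t s + n) 0 G.
Definition postG (G : list T) (s : S) : nat :=
  fold_right (fun t n => post N t s + n) 0 G.

Definition enabled (M : marking) (G : list T) : Prop :=
  G <> [] /\ forall s, preG G s <= M s.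

Definition fires (M : marking) (G : list T) (M' : marking) : Prop :=
  enabled M G /\ forall s, M' s = M s - preG G s + postG G s.

Inductive reachable : marking -> Prop :=
| reach_init : reachable (M0 N)
| reach_step : forall M t M', reachable M -> fires M [t] M' -> reachable M'.

Definition concurrent (t u : T) : Prop :=
  exists M, reachable M /\ enabled M [t; u].

Definition structural_conflict_net : Prop :=
  forall t u, concurrent t u -> forall s, Nat.min (pre N t s) (pre N u s) = 0.

Definition lstep (alpha : option Act) (M M' : marking) : Prop :=
  exists t, lab N t = alpha /\ fires M [t] M'.

Definition tau_star : relation marking := clos_refl_trans marking (lstep None).

Fixpoint weak (M : marking) (sigma : list Act) (M' : marking) : Prop :=
  match sigma with
  | [] => tau_star M M'
  | a :: sigma' => exists M1 M2, tau_star M M1 /\ lstep (Some a) M1 M2 /\ weak M2 sigma' M'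
  end.

(* M --A--> for a step A (finite nonempty multiset over Act, given as a list) *)
Definition can_step (M : marking) (A : list Act) : Prop :=
  exists G : list T,
    Forall (fun t => lab N t <> None) G /\
    Permutation (map (lab N) G) (map Some A) /\
    enabled M G.

(* <sigma, X> \in F(N); X a finite set of steps given as a list of lists *)
Definition failure (sigma : list Act) (X : list (list Act)) : Prop :=
  exists M, weak (M0 N) sigma M /\
    (~ exists M', lstep None M M') /\
    (forall A, In A X -> ~ can_step M A).

Definition fully_reachable_pure_M : Prop :=
  exists t u v : T,
    (exists s, Nat.min (pre N t s) (pre N u s) <> 0) /\
    (exists s, Nat.min (pre N u s) (pre N v s) <> 0) /\
    (forall s, Nat.min (pre N t s) (pre N v s) = 0) /\
    (exists M, reachable M /\
       forall s, Nat.max (Nat.max (pre N t s) (pre N u s)) (pre N v s) <= M s).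

End Nets.

(* Main.v *)
Require Import Defs.
From Stdlib Require Import List Permutation Relations Arith Lia Classical.
Import ListNotations.

Lemma tau_star_reach {S T Act} (N : net S T Act) M M' :
  tau_star N M M' -> reachable N M -> reachable N M'.
Proof.
  induction 1; auto.
  destruct H as [t [_ Hf]]. intro; eapply reach_step; eauto.
Qed.

Lemma weak_reach {S T Act} (N : net S T Act) sigma : forall M M',
  weak N M sigma M' -> reachable N M -> reachable N M'.
Proof.
  induction sigma as [|a sigma IH]; simpl; intros M M' H HR.
  - eapply tau_star_reach; eauto.
  - destruct H as [M1 [M2 [H1 [[t [_ Hf]] H3]]]].
    eapply IH; [exact H3|]. eapply reach_step; [|exact Hf].
    eapply tau_star_reach; eauto.
Qed.

Theorem lemma5p5 (S T Act : Type) (N : net S T Act)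
  (sigma : list Act) (a b c : Act) :
  structural_conflict_net N ->
  a <> c ->
  ~ failure N sigma [[a; c]] ->
  ~ failure N sigma [[b]] ->
  failure N sigma [[a; b]; [b; c]] ->
  fully_reachable_pure_M N.
Proof.
  intros Hscn Hac Hnac Hnb [M [Hw [Hst Hx]]].
  assert (Hr : reachable N M) by (eapply weak_reach; [exact Hw| constructor]).
  assert (Cb : can_step N M [b]).
  { apply NNPP; intro H; apply Hnb; exists M; split; auto; split; auto.
    intros A [<-|[]]; exact H. }
  assert (Cac : can_step N M [a; c]).
  { apply NNPP; intro H; apply Hnac; exists M; split; auto; split; auto.
    intros A [<-|[]]; exact H. }
  assert (Nab : ~ can_step N M [a; b]) by (apply Hx; simpl; auto).
  assert (Nbc : ~ can_step N M [b; c]) by (apply Hx; simpl; auto).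
  destruct Cb as [G [_ [HP [_ HE]]]].
  apply Permutation_sym, Permutation_length_1_inv in HP.
  destruct G as [|u [|? ?]]; try discriminate. simpl in HP. injection HP as Hu.
  destruct Cac as [G [HF [HP [_ HE2]]]].
  apply Permutation_sym, Permutation_length_2_inv in HP.
  destruct G as [|x [|y [|? ?]]]; try (destruct HP as [HP|HP]; discriminate).
  assert (exists t v, lab N t = Some a /\ lab N v = Some c /\
       (forall s, preG N [t; v] s <= M s)) as [t [v [Ht [Hv HE3]]]].
  { simpl in HP. destruct HP as [HP|HP]; injection HP as H1 H2.
    - exists x, y; auto.
    - exists y, x; repeat split; auto. intro s; specialize (HE2 s); simpl in *; lia. }
  simpl in HE, HE3.
  exists t, u, v. split; [|split; [|split]].
  - apply NNPP; intro H. apply Nab. exists [t; u]. repeat split.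
    + repeat constructor; congruence.
    + simpl. rewrite Ht, Hu. apply Permutation_refl.
    + discriminate.
    + intro s. assert (Nat.min (pre N t s) (pre N u s) = 0) by (apply NNPP; intro; apply H; eauto).
      specialize (HE s); specialize (HE3 s); simpl; lia.
  - apply NNPP; intro H. apply Nbc. exists [u; v]. repeat split.
    + repeat constructor; congruence.
    + simpl. rewrite Hv, Hu. apply Permutation_refl.
    + discriminate.
    + intro s. assert (Nat.min (pre N u s) (pre N v s) = 0) by (apply NNPP; intro; apply H; eauto).
      specialize (HE s); specialize (HE3 s); simpl; lia.
  - apply Hscn. exists M. split; auto. split; [discriminate| exact HE3].
  - exists M. split; auto. intro s. specialize (HE s); specialize (HE3 s); lia.
Qed.
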